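(* Fix a real constant $c>-1$, let $\alpha\to\infty$ and put $\beta=\alpha-c$ (so that $\alpha>\beta-1>0$ for all sufficiently large $\alpha$). Then \[ \lim_{\alpha\to\infty}\alpha^{\frac{c+1}{2}}\,I(\alpha,\beta)=6^{\frac{c+1}{2}}\,\Gamma\!\left(\frac{c+1}{2}\right). \] In particular, \[ \lim_{\alpha\to\infty}\sqrt{\alpha}\,I(\alpha,\alpha)=\sqrt{6\pi}. \]
   Context: For real $\alpha,\beta$ with $\alpha>\beta-1>0$, $I(\alpha,\beta)=\int_{-\infty}^{\infty}|\sin t|^{\alpha}|t|^{-\beta}\,dt$; $\Gamma$ denotes the gamma function. *)

(* Defs.v *)
From Stdlib Require Import Reals Lra.
Open Scope R_scope.

(* Real power x^a for x >= 0 and a > 0, with the convention 0^a = 0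
   (Stdlib's Rpower 0 a = exp (a * ln 0) = 1, which is wrong here). *)
Definition rpow0 (x a : R) : R := if Req_EM_T x 0 then 0 else Rpower x a.

Definition is_RInt (f : R -> R) (a b v : R) : Prop :=
  exists pr : Riemann_integrable f a b, RiemannInt pr = v.

Definition is_improper_int_pos (f : R -> R) (l : R) : Prop :=
  forall eps : R, 0 < eps ->
  exists d M0 : R, 0 < d /\ 0 < M0 /\
  forall e M : R, 0 < e < d -> M0 < M ->
  exists v : R, is_RInt f e M v /\ Rabs (v - l) < eps.

(* Improper integral over the whole real line (singular points allowed at 0
   and at +-oo): int_{-oo}^{oo} f = int_0^oo f(t) dt + int_0^oo f(-t) dt. *)
Definition is_improper_int_R (f : R -> R) (l : R) : Prop :=
  exists l1 l2 : R,
    is_improper_int_pos f l1 /\ is_improper_int_pos (fun t => f (- t)) l2 /\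
    l = l1 + l2.

Definition I_integrand (alpha beta : R) (t : R) : R :=
  rpow0 (Rabs (sin t)) alpha * Rpower (Rabs t) (- beta).

Definition is_I (alpha beta v : R) : Prop :=
  is_improper_int_R (I_integrand alpha beta) v.

Definition is_Gamma (s G : R) : Prop :=
  is_improper_int_pos (fun t => Rpower t (s - 1) * exp (- t)) G.

(* Main.v *)
Require Import Defs.
From Stdlib Require Import Reals Lra.
From Stdlib Require Import FunctionalExtensionality.
From Coquelicot Require Import Coquelicot.
Open Scope R_scope.

Lemma Chasles' (f : R -> R) a b c : ex_RInt f a b -> ex_RInt f b c -> RInt f a b + RInt f b c = RInt f a c.
Proof. intros H1 H2. exact (RInt_Chasles f a b c H1 H2). Qed.

Definition pcont (f : R -> R) := forall t, 0 < t -> continuous f t.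

Lemma pcont_ex (f : R -> R) a b : pcont f -> 0 < a -> 0 < b -> ex_RInt f a b.
Proof.
  intros Hf Ha Hb. apply (ex_RInt_continuous (V:=R_CompleteNormedModule)). intros z Hz. apply Hf.
  destruct Hz as [Hz _]. eapply Rlt_le_trans; [|exact Hz].
  unfold Rmin; destruct (Rle_dec a b); lra.
Qed.

Definition impr (f : R -> R) (l : R) : Prop :=
  forall eps : R, 0 < eps ->
  exists d M0 : R, 0 < d /\ 0 < M0 /\
  forall e M : R, 0 < e < d -> M0 < M -> Rabs (RInt f e M - l) < eps.

Lemma impr_to_is f l : pcont f -> impr f l -> is_improper_int_pos f l.
Proof.
  intros Hf H eps Heps. destruct (H eps Heps) as [d [M0 [Hd [HM H']]]].
  exists d, M0. split; [lra|split;[lra|]]. intros e M He HM'.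
  exists (RInt f e M). split; [|apply H'; auto].
  assert (Hex : ex_RInt f e M) by (apply pcont_ex; [assumption|lra|lra]).
  exists (ex_RInt_Reals_0 f e M Hex). symmetry. apply RInt_Reals.
Qed.

Lemma is_to_impr f l : is_improper_int_pos f l -> impr f l.
Proof.
  intros H eps Heps. destruct (H eps Heps) as [d [M0 [Hd [HM H']]]].
  exists d, M0. split; [lra|split;[lra|]]. intros e M He HM'.
  destruct (H' e M He HM') as [v [[pr Hv] Hl]].
  rewrite (RInt_Reals f e M pr), Hv. exact Hl.
Qed.

Lemma impr_uniq f l1 l2 : impr f l1 -> impr f l2 -> l1 = l2.
Proof.
  intros H1 H2. destruct (Req_dec l1 l2) as [|Hne]; auto. exfalso.
  set (eps := Rabs (l1 - l2) / 2).
  assert (Heps : 0 < eps) by (unfold eps; apply Rdiv_lt_0_compat; [apply Rabs_pos_lt; lra| lra]).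
  destruct (H1 eps Heps) as [d1 [M1 [Hd1 [HM1 K1]]]].
  destruct (H2 eps Heps) as [d2 [M2 [Hd2 [HM2 K2]]]].
  set (e := Rmin d1 d2 / 2). set (M := Rmax M1 M2 + 1).
  assert (He1 : 0 < e < d1) by (unfold e; unfold Rmin; destruct (Rle_dec d1 d2); lra).
  assert (He2 : 0 < e < d2) by (unfold e; unfold Rmin; destruct (Rle_dec d1 d2); lra).
  assert (HM1' : M1 < M) by (unfold M; unfold Rmax; destruct (Rle_dec M1 M2); lra).
  assert (HM2' : M2 < M) by (unfold M; unfold Rmax; destruct (Rle_dec M1 M2); lra).
  specialize (K1 e M He1 HM1'). specialize (K2 e M He2 HM2').
  assert (Rabs (l1 - l2) < 2 * eps).
  { replace (l1 - l2) with (-(RInt f e M - l1) + (RInt f e M - l2)) by ring.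
    eapply Rle_lt_trans; [apply Rabs_triang|]. rewrite Rabs_Ropp. lra. }
  unfold eps in H. lra.
Qed.

Lemma impr_bound f l X r : impr f l ->
  (exists d' M', 0 < d' /\ forall e M, 0 < e < d' -> M' < M -> Rabs (RInt f e M - X) <= r) ->
  Rabs (l - X) <= r.
Proof.
  intros H [d' [M' [Hd' K]]].
  apply Rnot_lt_le. intros Hlt.
  set (eps := Rabs (l - X) - r).
  assert (Heps : 0 < eps) by (unfold eps; lra).
  destruct (H eps Heps) as [d [M0 [Hd [HM H']]]].
  set (e := Rmin d d' / 2). set (M := Rmax M0 M' + 1).
  assert (He1 : 0 < e < d) by (unfold e; unfold Rmin; destruct (Rle_dec d d'); lra).
  assert (He2 : 0 < e < d') by (unfold e; unfold Rmin; destruct (Rle_dec d d'); lra).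
  assert (HM1' : M0 < M) by (unfold M; unfold Rmax; destruct (Rle_dec M0 M'); lra).
  assert (HM2' : M' < M) by (unfold M; unfold Rmax; destruct (Rle_dec M0 M'); lra).
  specialize (H' e M He1 HM1'). specialize (K e M He2 HM2').
  assert (Rabs (l - X) <= Rabs (RInt f e M - l) + Rabs (RInt f e M - X)).
  { replace (l - X) with (-(RInt f e M - l) + (RInt f e M - X)) by ring.
    eapply Rle_trans; [apply Rabs_triang|]. rewrite Rabs_Ropp. lra. }
  unfold eps in H'. lra.
Qed.

Lemma RInt_mono_int f e e1 M1 M : pcont f -> (forall t, 0 < t -> 0 <= f t) ->
  0 < e -> e <= e1 -> e1 <= M1 -> M1 <= M -> RInt f e1 M1 <= RInt f e M.
Proof.
  intros Hc Hp H1 H2 H3 H4.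
  rewrite <- (Chasles' f e e1 M); try (apply pcont_ex; [assumption|lra|lra]).
  rewrite <- (Chasles' f e1 M1 M); try (apply pcont_ex; [assumption|lra|lra]).
  assert (0 <= RInt f e e1) by (apply RInt_ge_0; [lra|apply pcont_ex; [assumption|lra|lra]|intros; apply Hp; lra]).
  assert (0 <= RInt f M1 M) by (apply RInt_ge_0; [lra|apply pcont_ex; [assumption|lra|lra]|intros; apply Hp; lra]).
  lra.
Qed.

Lemma impr_mono_exists f B : pcont f -> (forall t, 0 < t -> 0 <= f t) ->
  (forall e M, 0 < e < M -> RInt f e M <= B) -> exists l, impr f l.
Proof.
  intros Hc Hp HB.
  set (E := fun y => exists e M, 0 < e < M /\ y = RInt f e M).
  assert (Hb : bound E) by (exists B; intros y [e [M [HeM ->]]]; apply HB; auto).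
  assert (Hne : exists y, E y) by (exists (RInt f 1 2); exists 1, 2; split; [lra|auto]).
  destruct (completeness E Hb Hne) as [l [Hub Hlub]].
  exists l. intros eps Heps.
  assert (Hex : exists e1 M1, 0 < e1 < M1 /\ l - eps < RInt f e1 M1).
  { apply Classical_Prop.NNPP. intros Hn. assert (l <= l - eps); [|lra].
    apply Hlub. intros y [e [M [HeM ->]]]. apply Rnot_lt_le. intros Hl. apply Hn.
    exists e, M. auto. }
  destruct Hex as [e1 [M1 [He1 Hl1]]].
  exists e1, M1. split; [lra|split;[lra|]]. intros e M He HM.
  assert (RInt f e1 M1 <= RInt f e M) by (apply RInt_mono_int; auto; lra).
  assert (RInt f e M <= l) by (apply Hub; exists e, M; split; [lra|auto]).
  apply Rabs_def1; lra.
Qed.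

Lemma exp_le' x y : x <= y -> exp x <= exp y.
Proof. intros [H|H]; [left; apply exp_increasing; auto|subst; lra]. Qed.

Lemma exp_le_inv' x y : exp x <= exp y -> x <= y.
Proof. intros H. destruct (Rle_dec x y) as [|Hn]; auto. assert (exp y < exp x) by (apply exp_increasing; lra). lra. Qed.

Lemma ln_le' x y : 0 < x -> x <= y -> ln x <= ln y.
Proof. intros Hx [H|H]; [left; apply ln_increasing; auto|subst; lra]. Qed.

Lemma exp_ge_1plus x : 1 + x <= exp x.
Proof. apply exp_ineq1_le. Qed.

Lemma Rpower_pos x p : 0 < Rpower x p.
Proof. unfold Rpower. apply exp_pos. Qed.

Lemma exp_neg_le_pow y p : 0 < y -> 0 < p -> exp (- y) <= Rpower (p / y) p.
Proof.
  intros Hy Hp. unfold Rpower. apply exp_le'.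
  assert (H1 : y / p <= exp (y / p)) by (pose proof (exp_ge_1plus (y/p)); lra).
  assert (H2 : ln (y / p) <= y / p).
  { apply exp_le_inv'. rewrite exp_ln by (apply Rdiv_lt_0_compat; lra). exact H1. }
  replace (ln (p / y)) with (- ln (y / p)).
  2:{ replace (p / y) with (/ (y / p)) by (field; lra). rewrite ln_Rinv; [ring|apply Rdiv_lt_0_compat; lra]. }
  assert (p * ln (y / p) <= p * (y / p)) by (apply Rmult_le_compat_l; lra).
  replace (p * (y / p)) with y in H by (field; lra). lra.
Qed.

Lemma is_derive_Rpower x p : 0 < x -> is_derive (fun t => Rpower t p) x (p * Rpower x (p - 1)).
Proof. intros Hx. apply is_derive_Reals. apply derivable_pt_lim_power; auto. Qed.

Lemma cont_Rpower x p : 0 < x -> continuous (fun t => Rpower t p) x.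
Proof. intros Hx. apply (ex_derive_continuous (K:=R_AbsRing) (V:=R_NormedModule)). eexists. apply is_derive_Rpower; auto. Qed.

Lemma RInt_Rpower p a b : 0 < a -> 0 < b -> p + 1 <> 0 ->
  RInt (fun t => Rpower t p) a b = (Rpower b (p + 1) - Rpower a (p + 1)) / (p + 1).
Proof.
  intros Ha Hb Hp. apply is_RInt_unique.
  assert (H := is_RInt_derive (V:=R_CompleteNormedModule) (fun t => Rpower t (p+1) / (p+1)) (fun t => Rpower t p) a b).
  replace ((Rpower b (p + 1) - Rpower a (p + 1)) / (p + 1)) with (minus (Rpower b (p+1) / (p+1)) (Rpower a (p+1)/(p+1))).
  2:{ unfold minus, plus, opp; simpl. field. auto. }
  apply H.
  - intros x Hx. assert (0 < x) by (destruct Hx as [Hx _]; eapply Rlt_le_trans; [|exact Hx]; unfold Rmin; destruct (Rle_dec a b); lra).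
    apply is_derive_Reals.
    replace (Rpower x p) with (/ (p + 1) * ((p + 1) * Rpower x (p + 1 - 1))).
    2:{ replace (p + 1 - 1) with p by ring. field. auto. }
    assert (Hd := derivable_pt_lim_scal (fun t => Rpower t (p+1)) (/(p+1)) x _ (derivable_pt_lim_power x (p+1) H0)).
    unfold mult_real_fct in Hd.
    intros eps Heps. destruct (Hd eps Heps) as [del Hdel]. exists del. intros h Hh Hh2.
    specialize (Hdel h Hh Hh2). unfold Rdiv. replace (Rpower (x + h) (p + 1) * / (p + 1) - Rpower x (p + 1) * / (p + 1)) with (/ (p + 1) * Rpower (x + h) (p + 1) - / (p + 1) * Rpower x (p + 1)) by ring. exact Hdel.
  - intros x Hx. apply cont_Rpower. destruct Hx as [Hx _]; eapply Rlt_le_trans; [|exact Hx]; unfold Rmin; destruct (Rle_dec a b); lra.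
Qed.

Lemma cmul (f g : R -> R) x : continuous f x -> continuous g x -> continuous (fun y => f y * g y) x.
Proof. intros H1 H2. exact (@continuous_mult R_UniformSpace R_AbsRing f g x H1 H2). Qed.
Lemma ccomp (f g : R -> R) x : continuous f x -> continuous g (f x) -> continuous (fun y => g (f y)) x.
Proof. intros H1 H2. exact (@continuous_comp R_UniformSpace R_UniformSpace R_UniformSpace f g x H1 H2). Qed.
Lemma cplus (f g : R -> R) x : continuous f x -> continuous g x -> continuous (fun y => f y + g y) x.
Proof. intros H1 H2. exact (@continuous_plus R_UniformSpace R_AbsRing R_NormedModule f g x H1 H2). Qed.
Lemma copp (f : R -> R) x : continuous f x -> continuous (fun y => - f y) x.
Proof. intros H1. exact (@continuous_opp R_UniformSpace R_AbsRing R_NormedModule f x H1). Qed.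
Lemma cconst (k : R) x : continuous (fun _ : R => k) x.
Proof. exact (@continuous_const R_UniformSpace R_UniformSpace k x). Qed.
Lemma cid x : continuous (fun y : R => y) x.
Proof. exact (@continuous_id R_UniformSpace x). Qed.
Lemma cext (f g : R -> R) x : (forall y, f y = g y) -> continuous f x -> continuous g x.
Proof. intros H. apply (@continuous_ext R_UniformSpace R_UniformSpace). exact H. Qed.
Lemma creals (f : R -> R) x : continuity_pt f x -> continuous f x.
Proof. intros H. apply continuity_pt_filterlim. exact H. Qed.
Lemma csin x : continuous sin x.
Proof. apply creals. apply continuity_sin. Qed.
Lemma cexp x : continuous exp x.
Proof. apply continuous_exp. Qed.
Lemma cabs x : continuous Rabs x.
Proof. apply continuous_Rabs. Qed.
Lemma cln x : 0 < x -> continuous ln x.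
Proof. intros Hx. apply creals. apply derivable_continuous_pt. exists (/x). apply derivable_pt_lim_ln; auto. Qed.

Lemma rpow0_pos_eq y a : 0 < y -> rpow0 y a = exp (a * ln y).
Proof. intros Hy. unfold rpow0. destruct (Req_EM_T y 0); [lra|reflexivity]. Qed.

Lemma cont_rpow0_abs a y0 : 0 < a -> continuous (fun y => rpow0 (Rabs y) a) y0.
Proof.
  intros Ha. destruct (Req_dec y0 0) as [->|Hy0].
  - apply creals. unfold continuity_pt, continue_in, limit1_in, limit_in. simpl. unfold R_dist.
    intros eps Heps. exists (Rpower eps (/ a)). split; [apply Rpower_pos|].
    intros x [_ Hx]. rewrite Rabs_R0. unfold rpow0 at 2. destruct (Req_EM_T 0 0) as [_|]; [|lra].
    rewrite Rminus_0_r. rewrite Rminus_0_r in Hx.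
    unfold rpow0. destruct (Req_EM_T (Rabs x) 0). { rewrite Rabs_R0; lra. }
    assert (0 < Rabs x) by (pose proof (Rabs_pos x); lra).
    assert (0 < Rpower (Rabs x) a) by apply Rpower_pos.
    rewrite Rabs_pos_eq by lra.
    replace eps with (Rpower (Rpower eps (/ a)) a).
    + apply Rlt_Rpower_l; auto.
    + rewrite Rpower_mult. replace (/ a * a) with 1 by (field; lra). apply Rpower_1; auto.
  - apply (continuous_ext_loc (fun y => rpow0 (Rabs y) a) (fun y => exp (a * ln (Rabs y)))).
    + assert (Hl : forall y, y <> 0 -> exp (a * ln (Rabs y)) = rpow0 (Rabs y) a).
      { intros y Hy. rewrite rpow0_pos_eq; auto. apply Rabs_pos_lt; auto. }
      destruct (Rlt_dec 0 y0).
      * apply (locally_interval _ y0 (Finite 0) p_infty); simpl; auto. intros y Hy _. apply Hl; lra.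
      * apply (locally_interval _ y0 m_infty (Finite 0)); simpl; auto; [lra|]. intros y _ Hy. apply Hl; lra.
    + apply (ccomp (fun y => a * ln (Rabs y)) exp). 2: apply cexp.
      apply (cmul (fun _ => a) (fun y => ln (Rabs y))). apply cconst.
      apply (ccomp Rabs ln). apply cabs. apply cln. apply Rabs_pos_lt; auto.
Qed.

Lemma cont_Rpower_abs q t : t <> 0 -> continuous (fun y => Rpower (Rabs y) q) t.
Proof.
  intros Ht. apply (ccomp Rabs (fun y => Rpower y q)). apply cabs. apply cont_Rpower. apply Rabs_pos_lt; auto.
Qed.

Section Integrand.
Variables a c : R.
Hypothesis Ha : 0 < a.

Definition fI := I_integrand a (a - c).

Lemma fI_pcont : pcont fI.
Proof.
  intros t Ht. unfold fI, I_integrand.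
  apply (cmul (fun t => rpow0 (Rabs (sin t)) a) (fun t => Rpower (Rabs t) (- (a - c)))).
  - apply (ccomp sin (fun y => rpow0 (Rabs y) a)). apply csin. apply cont_rpow0_abs; auto.
  - apply cont_Rpower_abs. lra.
Qed.

Lemma fI_ge0 t : 0 <= fI t.
Proof.
  unfold fI, I_integrand, rpow0. destruct (Req_EM_T (Rabs (sin t)) 0); [lra|].
  apply Rmult_le_pos; left; apply Rpower_pos.
Qed.

Lemma fI_zero t : sin t = 0 -> fI t = 0.
Proof.
  intros H. unfold fI, I_integrand, rpow0. rewrite H, Rabs_R0.
  destruct (Req_EM_T 0 0); [ring|lra].
Qed.

Lemma fI_eq t : 0 < t -> sin t <> 0 -> fI t = Rpower t c * exp (a * ln (Rabs (sin t) / t)).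
Proof.
  intros Ht Hs. assert (Hs' : 0 < Rabs (sin t)) by (apply Rabs_pos_lt; auto).
  unfold fI, I_integrand. rewrite rpow0_pos_eq by auto. rewrite (Rabs_pos_eq t) by lra.
  unfold Rpower. rewrite <- !exp_plus. f_equal.
  unfold Rdiv. rewrite ln_mult by (auto; apply Rinv_0_lt_compat; auto). rewrite ln_Rinv by auto. ring.
Qed.

Lemma fI_neg t : fI (- t) = fI t.
Proof. unfold fI, I_integrand. rewrite sin_neg, !Rabs_Ropp. reflexivity. Qed.

End Integrand.

Lemma INR_fact_1 : INR (Factorial.fact 1) = 1.
Proof. rewrite !fact_simpl. rewrite !mult_INR. simpl. ring. Qed.
Lemma INR_fact_3 : INR (Factorial.fact 3) = 6.
Proof. rewrite !fact_simpl. rewrite !mult_INR. simpl. ring. Qed.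
Lemma INR_fact_5 : INR (Factorial.fact 5) = 120.
Proof. rewrite !fact_simpl. rewrite !mult_INR. simpl. ring. Qed.
Lemma INR_fact_7 : INR (Factorial.fact 7) = 5040.
Proof. rewrite !fact_simpl. rewrite !mult_INR. simpl. ring. Qed.
Lemma INR_fact_9 : INR (Factorial.fact 9) = 362880.
Proof. rewrite !fact_simpl. rewrite !mult_INR. simpl. ring. Qed.

Lemma sin_bounds_poly t : 0 <= t <= PI ->
  t - t^3/6 + t^5/120 - t^7/5040 <= sin t <= t - t^3/6 + t^5/120 - t^7/5040 + t^9/362880.
Proof.
  intros Ht. destruct (SIN t) as [H1 H2]; try lra.
  unfold sin_lb, sin_ub, sin_approx in *. cbn [sum_f_R0] in *. unfold sin_term in *. cbn [Nat.mul Nat.add] in *.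
  rewrite INR_fact_1, INR_fact_3, INR_fact_5, INR_fact_7 in *. rewrite INR_fact_9 in H2.
  split; [eapply Rle_trans; [|exact H1]|eapply Rle_trans; [exact H2|]]; right; simpl; field.
Qed.

Lemma PI_gt_3 : 3 < PI.
Proof. pose proof PI2_3_2. lra. Qed.

Lemma sin_small t : 0 < t <= 1 -> t - t^3/6 <= sin t <= t - t^3/6 + t^5/120.
Proof.
  intros Ht. pose proof PI_gt_3. destruct (sin_bounds_poly t) as [H1 H2]; [lra|].
  assert (0 <= t^5) by (apply pow_le; lra).
  assert (t^7 <= t^5) by (replace (t^7) with (t^5 * (t*t)) by ring; replace (t^5) with (t^5*1) at 2 by ring;
    apply Rmult_le_compat_l; [lra|nra]).
  assert (t^9 <= t^7) by (replace (t^9) with (t^7 * (t*t)) by ring; replace (t^7) with (t^7*1) at 2 by ring;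
    apply Rmult_le_compat_l; [apply pow_le; lra|nra]).
  assert (0 <= t^9) by (apply pow_le; lra).
  split; lra.
Qed.

Lemma sin_mid t : 1 <= t <= 20/17 -> sin t <= 17/20 * t.
Proof.
  intros Ht. pose proof PI_gt_3. destruct (sin_bounds_poly t) as [H1 H2]; [lra|].
  set (u := t * t).
  assert (Hu : 1 <= u <= 7/5) by (unfold u; split; nra).
  replace (t - t ^ 3 / 6 + t ^ 5 / 120 - t ^ 7 / 5040 + t ^ 9 / 362880) with
    (t * (1 - u/6 + u*u/120 - u*u*u/5040 + u*u*u*u/362880)) in H2 by (unfold u; field).
  assert (1 - u/6 + u*u/120 - u*u*u/5040 + u*u*u*u/362880 <= 17/20).
  { assert (u*u <= 7/5*u) by nra. assert (0 <= u*u*u) by (apply Rmult_le_pos; nra).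
    assert (u*u*u*u <= 4) by nra. lra. }
  nra.
Qed.

Lemma abs_sin_tail t : 1 <= t -> Rabs (sin t) <= 17/20 * t.
Proof.
  intros Ht. pose proof PI_gt_3.
  destruct (Rle_dec t (20/17)).
  - assert (0 < sin t) by (apply sin_gt_0; lra). rewrite Rabs_pos_eq by lra. apply sin_mid; lra.
  - pose proof (SIN_bound t). apply Rabs_le in H0. lra.
Qed.

Lemma exp_ge_1plus' x : 1 + x <= exp x.
Proof. apply exp_ineq1_le. Qed.

Lemma ln_sinc_upper t : 0 < t <= 1 -> ln (sin t / t) <= - t^2/6 + t^4/120.
Proof.
  intros Ht. destruct (sin_small t Ht) as [H1 H2].
  assert (Hp : 0 < sin t / t).
  { apply Rdiv_lt_0_compat; [|lra]. assert (0 < t - t^3/6); [|lra].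
    assert (t^3 <= t) by (replace (t^3) with (t*(t*t)) by ring; nra). lra. }
  apply exp_le_inv'. rewrite exp_ln by auto.
  eapply Rle_trans; [|apply exp_ge_1plus'].
  apply (Rmult_le_reg_r t); [lra|]. unfold Rdiv at 1. rewrite Rmult_assoc, Rinv_l, Rmult_1_r by lra.
  replace ((1 + (- t ^ 2 / 6 + t ^ 4 / 120)) * t) with (t - t^3/6 + t^5/120) by field. auto.
Qed.

Lemma ln_sinc_lower t : 0 < t <= 1 -> - t^2/6 - t^4/18 <= ln (sin t / t).
Proof.
  intros Ht. destruct (sin_small t Ht) as [H1 H2].
  set (u := t^2/6).
  assert (Hu : 0 < u <= 1/6) by (unfold u; split; [apply Rdiv_lt_0_compat; [apply pow_lt|]|]; nra).
  assert (Hy : 1 - u <= sin t / t).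
  { apply (Rmult_le_reg_r t); [lra|]. unfold Rdiv. rewrite Rmult_assoc, Rinv_l, Rmult_1_r by lra. unfold u. lra. }
  assert (Hl : - (u / (1 - u)) <= ln (1 - u)).
  { apply exp_le_inv'. rewrite exp_ln by lra. rewrite exp_Ropp.
    assert (1 + u / (1 - u) <= exp (u / (1 - u))) by apply exp_ge_1plus'.
    replace (1 + u / (1 - u)) with (/ (1 - u)) in H by (field; lra).
    replace (1 - u) with (/ / (1 - u)) at 2 by (field; lra).
    apply Rinv_le_contravar; [apply Rinv_0_lt_compat; lra|auto]. }
  assert (u / (1 - u) <= u + 2 * u^2).
  { apply (Rmult_le_reg_r (1 - u)); [lra|]. unfold Rdiv. rewrite Rmult_assoc, Rinv_l, Rmult_1_r by lra. nra. }
  assert (ln (1 - u) <= ln (sin t / t)) by (apply ln_le'; [lra|auto]).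
  unfold u in *. replace (t^4/18) with (2 * (t^2/6)^2) by (simpl; field). lra.
Qed.

Lemma div_le_const x t k : 0 < t -> x <= k * t -> x / t <= k.
Proof. intros Ht H. replace k with (k * t / t) by (field; lra). unfold Rdiv. apply Rmult_le_compat_r; [left; apply Rinv_0_lt_compat; lra|auto]. Qed.

Lemma ln_lt_17_20 : ln (17/20) <= - (3/20).
Proof.
  apply exp_le_inv'. rewrite exp_ln by lra. pose proof (exp_ge_1plus' (-(3/20))). lra.
Qed.

Lemma ln_sinc_tail t : 1 <= t -> sin t <> 0 -> ln (Rabs (sin t) / t) <= - (3/40) - ln t / 2.
Proof.
  intros Ht Hs. assert (Hp : 0 < Rabs (sin t) / t) by (apply Rdiv_lt_0_compat; [apply Rabs_pos_lt|]; auto; lra).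
  assert (H1 : ln (Rabs (sin t) / t) <= ln (17/20)).
  { apply ln_le'; auto. apply div_le_const; [lra|]. apply abs_sin_tail; auto. }
  assert (H2 : ln (Rabs (sin t) / t) <= ln (/ t)).
  { apply ln_le'; auto. unfold Rdiv. pose proof (SIN_bound t).
    replace (/ t) with (1 * / t) at 2 by ring. apply Rmult_le_compat_r; [left; apply Rinv_0_lt_compat; lra|].
    apply Rabs_le; lra. }
  rewrite ln_Rinv in H2 by lra. pose proof ln_lt_17_20. lra.
Qed.

Lemma abs_exp_m1 u W : Rabs u <= W -> Rabs (exp u - 1) <= exp W - 1.
Proof.
  intros H. assert (HW : exp (Rabs u) <= exp W) by (apply exp_le'; auto).
  destruct (Rle_dec 0 u).
  - rewrite (Rabs_pos_eq u) in H, HW by lra. pose proof (exp_ge_1plus' u). rewrite Rabs_pos_eq by lra. lra.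
  - rewrite (Rabs_left u) in H, HW by lra.
    assert (exp u <= 1) by (rewrite <- exp_0; apply exp_le'; lra).
    rewrite Rabs_left1 by lra.
    pose proof (exp_ge_1plus' u). pose proof (exp_ge_1plus' (-u)). lra.
Qed.

Section Bounds.
Variables a c : R.
Hypothesis Ha : 0 < a.

Lemma sin_pos_01 t : 0 < t <= 1 -> 0 < sin t.
Proof. intros. apply sin_gt_0; [lra|]. pose proof PI_gt_3. lra. Qed.

Lemma fI_eq01 t : 0 < t <= 1 -> fI a c t = Rpower t c * exp (a * ln (sin t / t)).
Proof.
  intros Ht. pose proof (sin_pos_01 t Ht). rewrite fI_eq by lra. rewrite Rabs_pos_eq by lra. reflexivity.
Qed.

Lemma fI_le_D t : 0 < t <= 1 -> fI a c t <= Rpower t c * exp (- (a * t^2 / 12)).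
Proof.
  intros Ht. rewrite fI_eq01 by auto. apply Rmult_le_compat_l; [left; apply Rpower_pos|].
  apply exp_le'. pose proof (ln_sinc_upper t Ht).
  assert (t^4/120 <= t^2/12) by (replace (t^4) with (t^2*t^2) by ring; assert (t^2 <= 1) by (simpl; nra);
    assert (0 <= t^2) by (apply pow_le; lra); nra).
  assert (a * ln (sin t / t) <= a * (- (t^2/12))) by (apply Rmult_le_compat_l; lra).
  lra.
Qed.

Lemma fI_near t : 0 < t <= 1 ->
  Rabs (fI a c t - Rpower t c * exp (- (a / 6 * t^2))) <= Rpower t c * (exp (a * t^4 / 18) - 1).
Proof.
  intros Ht. rewrite fI_eq01 by auto.
  set (u := a * ln (sin t / t) + a / 6 * t^2).
  replace (exp (a * ln (sin t / t))) with (exp (- (a / 6 * t^2)) * exp u) by (unfold u; rewrite <- exp_plus; f_equal; ring).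
  replace (Rpower t c * (exp (- (a / 6 * t ^ 2)) * exp u) - Rpower t c * exp (- (a / 6 * t ^ 2)))
    with (Rpower t c * exp (- (a / 6 * t ^ 2)) * (exp u - 1)) by ring.
  assert (Hp := Rpower_pos t c). assert (He := exp_pos (- (a / 6 * t ^ 2))).
  assert (He1 : exp (- (a / 6 * t ^ 2)) <= 1).
  { rewrite <- exp_0. apply exp_le'. assert (0 <= t^2) by (apply pow_le; lra). assert (0 <= a/6*t^2) by (apply Rmult_le_pos; lra). lra. }
  assert (Hu : Rabs u <= a * t^4 / 18).
  { pose proof (ln_sinc_upper t Ht). pose proof (ln_sinc_lower t Ht).
    assert (0 <= t^4) by (apply pow_le; lra).
    assert (a * ln (sin t / t) <= a * (- t ^ 2 / 6 + t ^ 4 / 120)) by (apply Rmult_le_compat_l; lra).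
    assert (a * (- t ^ 2 / 6 - t ^ 4 / 18) <= a * ln (sin t / t)) by (apply Rmult_le_compat_l; lra).
    assert (a * t^4 / 120 <= a * t^4 / 18) by (assert (0 <= a * t^4) by (apply Rmult_le_pos; lra); lra).
    unfold u. apply Rabs_le. split; nra. }
  pose proof (abs_exp_m1 u _ Hu).
  rewrite Rabs_mult, (Rabs_pos_eq (Rpower t c * _)) by (apply Rmult_le_pos; lra).
  assert (0 <= Rabs (exp u - 1)) by apply Rabs_pos.
  rewrite Rmult_assoc. apply Rmult_le_compat_l; [lra|].
  apply Rle_trans with (1 * Rabs (exp u - 1)); [apply Rmult_le_compat_r; lra|lra].
Qed.

Lemma fI_tail t : 1 <= t -> fI a c t <= exp (- (3 * a / 40)) * Rpower t (c - a / 2).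
Proof.
  intros Ht. assert (Hp : 0 < exp (- (3 * a / 40)) * Rpower t (c - a / 2)) by (apply Rmult_lt_0_compat; [apply exp_pos|apply Rpower_pos]).
  destruct (Req_dec (sin t) 0) as [Hs|Hs]. { rewrite fI_zero by auto. lra. }
  rewrite fI_eq by (auto; lra). pose proof (ln_sinc_tail t Ht Hs).
  unfold Rpower. rewrite <- !exp_plus. apply exp_le'.
  assert (a * ln (Rabs (sin t) / t) <= a * (- (3 / 40) - ln t / 2)) by (apply Rmult_le_compat_l; lra).
  lra.
Qed.

End Bounds.

Lemma RInt_le' (f g : R -> R) a b : 0 < a -> a <= b -> pcont f -> pcont g ->
  (forall x, a < x < b -> f x <= g x) -> RInt f a b <= RInt g a b.
Proof.
  intros Ha Hab Hf Hg H. apply RInt_le; auto; apply pcont_ex; auto; lra.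
Qed.

Lemma impr_exists_split f B1 B2 : pcont f -> (forall t, 0 < t -> 0 <= f t) ->
  (forall e, 0 < e <= 1 -> RInt f e 1 <= B1) -> (forall M, 1 <= M -> RInt f 1 M <= B2) ->
  exists l, impr f l.
Proof.
  intros Hc Hp H1 H2. apply (impr_mono_exists f (B1 + B2)); auto.
  intros e M HeM. set (e' := Rmin e 1). set (M' := Rmax M 1).
  assert (He' : 0 < e' <= 1 /\ e' <= e) by (unfold e', Rmin; destruct (Rle_dec e 1); lra).
  assert (HM' : 1 <= M' /\ M <= M') by (unfold M', Rmax; destruct (Rle_dec M 1); lra).
  apply Rle_trans with (RInt f e' M'). apply RInt_mono_int; auto; lra.
  rewrite <- (Chasles' f e' 1 M') by (apply pcont_ex; auto; lra).
  pose proof (H1 e' (proj1 He')). pose proof (H2 M' (proj1 HM')). lra.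
Qed.

Lemma Rpower_div x y p : 0 < x -> 0 < y -> Rpower (x / y) p = Rpower x p * Rpower y (- p).
Proof.
  intros Hx Hy. unfold Rpower, Rdiv. rewrite ln_mult by (auto; apply Rinv_0_lt_compat; auto).
  rewrite ln_Rinv by auto. rewrite <- exp_plus. f_equal. ring.
Qed.

Lemma exp_mul_ln x p : 0 < x -> exp (p * ln x) = x * exp ((p - 1) * ln x).
Proof.
  intros Hx. replace (p * ln x) with (ln x + (p - 1) * ln x) by ring. rewrite exp_plus, exp_ln by auto. reflexivity.
Qed.

Lemma scalR (u v : R) : scal u v = u * v.
Proof. reflexivity. Qed.

Lemma Rpower_one s : Rpower 1 s = 1.
Proof. unfold Rpower. rewrite ln_1, Rmult_0_r, exp_0. reflexivity. Qed.

Definition Gf (s : R) (x : R) := Rpower x (s - 1) * exp (- x).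
Definition gk (c k : R) (t : R) := Rpower t c * exp (- (k * t^2)).

Lemma Gf_pcont s : pcont (Gf s).
Proof.
  intros t Ht. unfold Gf. apply (cmul (fun x => Rpower x (s-1)) (fun x => exp (- x))).
  apply cont_Rpower; auto. apply (ccomp (fun x => - x) exp). apply copp, cid. apply cexp.
Qed.

Lemma gk_cont c k t : 0 < t -> continuous (gk c k) t.
Proof.
  intros Ht. unfold gk. apply (cmul (fun x => Rpower x c) (fun x => exp (- (k * x^2)))).
  apply cont_Rpower; auto. apply (ccomp (fun x => - (k * x^2)) exp); [|apply cexp].
  apply copp. apply (cmul (fun _ => k) (fun x => x^2)). apply cconst.
  apply (cext (fun x => x * x)). intros; ring. apply (cmul (fun x => x) (fun x => x)); apply cid.
Qed.

Lemma gk_pcont c k : pcont (gk c k).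
Proof. intros t Ht. apply gk_cont; auto. Qed.

Lemma subst_gamma c k a b : 0 < k -> 0 < a -> 0 < b ->
  RInt (Gf ((c + 1) / 2)) (k * a^2) (k * b^2) = 2 * Rpower k ((c + 1) / 2) * RInt (gk c k) a b.
Proof.
  intros Hk Ha Hb. set (s := (c + 1) / 2).
  assert (Hmin : forall x, Rmin a b <= x <= Rmax a b -> 0 < x).
  { intros x [Hx _]. eapply Rlt_le_trans; [|exact Hx]. unfold Rmin; destruct (Rle_dec a b); lra. }
  rewrite <- (RInt_comp (V:=R_CompleteNormedModule) (Gf s) (fun t => k * t^2) (fun t => 2 * k * t)).
  - rewrite <- (RInt_scal (V:=R_CompleteNormedModule)).
    2:{ apply ex_RInt_continuous. intros z Hz. apply gk_cont. apply Hmin; auto. }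
    apply RInt_ext. intros x Hx. assert (0 < x) by (apply Hmin; lra).
    rewrite !scalR. unfold Gf, gk, Rpower.
    rewrite ln_mult by (auto; apply pow_lt; auto). rewrite ln_pow by auto.
    rewrite (exp_mul_ln k s) by auto. rewrite (exp_mul_ln x c) by auto.
    replace ((s - 1) * (ln k + INR 2 * ln x)) with ((s - 1) * ln k + (c - 1) * ln x)
      by (unfold s; simpl; field).
    rewrite exp_plus. unfold scal; simpl; unfold mult; simpl. ring.
  - intros x Hx. apply Gf_pcont. apply Rmult_lt_0_compat; auto. apply pow_lt. apply Hmin; auto.
  - intros x Hx. split.
    + auto_derive; auto. ring.
    + apply (cmul (fun _ => 2 * k) (fun x => x)). apply cconst. apply cid.
Qed.

Lemma Gamma_exists s : 0 < s -> exists G, impr (Gf s) G.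
Proof.
  intros Hs. set (p := s + 1).
  apply (impr_exists_split (Gf s) (1 / s) (Rpower p p)).
  - apply Gf_pcont.
  - intros t Ht. unfold Gf. apply Rmult_le_pos; left; [apply Rpower_pos|apply exp_pos].
  - intros e He. apply Rle_trans with (RInt (fun x => Rpower x (s - 1)) e 1).
    + apply RInt_le'; try lra. apply Gf_pcont. intros t Ht; apply cont_Rpower; auto.
      intros x Hx. unfold Gf. replace (Rpower x (s-1)) with (Rpower x (s-1) * 1) at 2 by ring.
      apply Rmult_le_compat_l; [left; apply Rpower_pos|]. rewrite <- exp_0. apply exp_le'. lra.
    + rewrite RInt_Rpower by lra. replace (s - 1 + 1) with s by ring.
      rewrite Rpower_one. pose proof (Rpower_pos e s).
      unfold Rdiv. apply Rmult_le_compat_r; [left; apply Rinv_0_lt_compat; auto|lra].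
  - intros M HM. apply Rle_trans with (RInt (fun x => Rpower p p * Rpower x (-2)) 1 M).
    + apply RInt_le'; try lra. apply Gf_pcont.
      intros t Ht; apply (cmul (fun _ => Rpower p p) (fun x => Rpower x (-2))); [apply cconst|apply cont_Rpower; auto].
      intros x Hx. unfold Gf.
      assert (H1 : exp (- x) <= Rpower (p / x) p) by (apply exp_neg_le_pow; unfold p; lra).
      rewrite Rpower_div in H1 by (unfold p; lra).
      apply Rle_trans with (Rpower x (s - 1) * (Rpower p p * Rpower x (- p))).
      apply Rmult_le_compat_l; [left; apply Rpower_pos|auto].
      right. replace (Rpower x (s - 1) * (Rpower p p * Rpower x (- p))) with (Rpower p p * (Rpower x (s - 1) * Rpower x (- p))) by ring.
      rewrite <- Rpower_plus. unfold p. f_equal. f_equal. ring.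
    + rewrite (RInt_scal (V:=R_CompleteNormedModule) (fun x => Rpower x (-2))).
      2:{ apply pcont_ex; try lra. intros t Ht; apply cont_Rpower; auto. }
      rewrite scalR.
      rewrite RInt_Rpower by lra. replace (-2 + 1) with (-1) by ring.
      rewrite Rpower_one.
      assert (HM1 : Rpower M (-1) = / M) by (replace (-1) with (-(1)) by ring; rewrite Rpower_Ropp, Rpower_1; lra).
      rewrite HM1.
      assert (0 < / M) by (apply Rinv_0_lt_compat; lra).
      assert (0 < Rpower p p) by apply Rpower_pos.
      replace ((/ M - 1) / -1) with (1 - / M) by (field; lra).
      nra.
Qed.

Lemma Rpower_sq t q : 0 < t -> Rpower (t^2) q = Rpower t (2 * q).
Proof. intros Ht. unfold Rpower. rewrite ln_pow by auto. f_equal. simpl. ring. Qed.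

Lemma RInt_minus' (f g : R -> R) a b : ex_RInt f a b -> ex_RInt g a b ->
  RInt (fun x => f x - g x) a b = RInt f a b - RInt g a b.
Proof. intros H1 H2. exact (RInt_minus (V:=R_CompleteNormedModule) f g a b H1 H2). Qed.

Lemma RInt_scal' (f : R -> R) a b k : ex_RInt f a b -> RInt (fun x => k * f x) a b = k * RInt f a b.
Proof. intros H. exact (RInt_scal (V:=R_CompleteNormedModule) f a b k H). Qed.

Lemma pcont_Rpower q : pcont (fun t => Rpower t q).
Proof. intros t Ht. apply cont_Rpower; auto. Qed.

Lemma pcont_scal k (f : R -> R) : pcont f -> pcont (fun t => k * f t).
Proof. intros H t Ht. apply (cmul (fun _ => k) f). apply cconst. apply H; auto. Qed.

Lemma RInt_Rpower_bound_le q e b : 0 < e -> e <= b -> q + 1 > 0 ->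
  RInt (fun t => Rpower t q) e b <= Rpower b (q + 1) / (q + 1).
Proof.
  intros He Heb Hq. rewrite RInt_Rpower by lra. pose proof (Rpower_pos e (q+1)).
  unfold Rdiv. apply Rmult_le_compat_r; [left; apply Rinv_0_lt_compat; lra|lra].
Qed.

Section Main.
Variables c a : R.
Hypothesis Hc : -1 < c.
Hypothesis Ha : 0 < a.
Let s := (c + 1) / 2.
Let p := s + 1.

Lemma p_pos : 0 < p.
Proof. unfold p, s. lra. Qed.

Lemma gk_le t k k' : 0 < t -> k' <= k -> gk c k t <= gk c k' t.
Proof.
  intros Ht Hk. unfold gk. apply Rmult_le_compat_l; [left; apply Rpower_pos|]. apply exp_le'.
  assert (0 <= t^2) by (apply pow_le; lra). nra.
Qed.

Lemma gk_ge0 k t : 0 <= gk c k t.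
Proof. unfold gk. apply Rmult_le_pos; left; [apply Rpower_pos|apply exp_pos]. Qed.

Lemma D_pointwise t : 0 < t -> gk c (a / 12) t <= Rpower (12 * p / a) p * Rpower t (-3).
Proof.
  intros Ht. unfold gk. pose proof p_pos.
  assert (Hq : 0 < a / 12 * t^2) by (apply Rmult_lt_0_compat; [lra|apply pow_lt; auto]).
  assert (H1 := exp_neg_le_pow _ p Hq H).
  replace (p / (a / 12 * t ^ 2)) with ((12 * p / a) / t^2) in H1 by (field; split; lra).
  rewrite Rpower_div in H1 by (try apply pow_lt; auto; apply Rdiv_lt_0_compat; lra).
  rewrite Rpower_sq in H1 by auto.
  apply Rle_trans with (Rpower t c * (Rpower (12 * p / a) p * Rpower t (2 * - p))).
  - apply Rmult_le_compat_l; [left; apply Rpower_pos|auto].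
  - right. replace (Rpower t c * (Rpower (12 * p / a) p * Rpower t (2 * - p))) with
      (Rpower (12 * p / a) p * (Rpower t c * Rpower t (2 * - p))) by ring.
    rewrite <- Rpower_plus. f_equal. f_equal. unfold p, s. field.
Qed.

Lemma D_int_bound tau b : 0 < tau -> tau <= b ->
  RInt (gk c (a / 12)) tau b <= Rpower (12 * p / a) p / (2 * tau^2).
Proof.
  intros Ht Hb.
  apply Rle_trans with (RInt (fun t => Rpower (12 * p / a) p * Rpower t (-3)) tau b).
  - apply RInt_le'; auto. apply gk_pcont. apply pcont_scal, pcont_Rpower.
    intros x Hx. apply D_pointwise; lra.
  - rewrite RInt_scal' by (apply pcont_ex; [apply pcont_Rpower|lra|lra]).
    rewrite RInt_Rpower by lra. replace (-3 + 1) with (-(2)) by ring.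
    rewrite !Rpower_Ropp. rewrite <- !(Rpower_pow 2) by lra. simpl (INR 2).
    assert (0 < Rpower (12 * p / a) p) by apply Rpower_pos.
    assert (0 < Rpower b 2) by apply Rpower_pos.
    assert (0 < Rpower tau 2) by apply Rpower_pos.
    replace ((/ Rpower b (1+1) - / Rpower tau (1+1)) / - (2)) with (/ (2 * Rpower tau 2) - / (2 * Rpower b 2))
      by (replace (1+1) with 2 by ring; field; lra).
    replace (1 + 1) with 2 by ring.
    replace ((/ Rpower b 2 - / Rpower tau 2) / - (2)) with (/ (2 * Rpower tau 2) - / (2 * Rpower b 2))
      by (field; split; lra).
    assert (0 < / (2 * Rpower b 2)) by (apply Rinv_0_lt_compat; lra).
    unfold Rdiv. nra.
Qed.

Lemma fI_pcont' : pcont (fI a c).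
Proof. apply fI_pcont; auto. Qed.

Lemma fI_tail_int M : 1 <= M -> a / 2 - c - 1 >= 1 -> RInt (fI a c) 1 M <= exp (- (3 * a / 40)).
Proof.
  intros HM Hac.
  apply Rle_trans with (RInt (fun t => exp (- (3 * a / 40)) * Rpower t (c - a / 2)) 1 M).
  - apply RInt_le'; try lra. apply fI_pcont'. apply pcont_scal, pcont_Rpower.
    intros x Hx. apply fI_tail; lra.
  - rewrite RInt_scal' by (apply pcont_ex; [apply pcont_Rpower|lra|lra]).
    rewrite RInt_Rpower by lra. rewrite Rpower_one.
    assert (H0 := exp_pos (- (3 * a / 40))). set (q := c - a / 2 + 1).
    assert (Hq : q <= -1) by (unfold q; lra). pose proof (Rpower_pos M q).
    assert ((Rpower M q - 1) / q <= 1).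
    { replace ((Rpower M q - 1) / q) with ((1 - Rpower M q) / (- q)) by (field; lra).
      apply div_le_const; lra. }
    nra.
Qed.

Lemma near_int e tau : 0 < e -> e <= tau -> tau <= 1 ->
  Rabs (RInt (fI a c) e tau - RInt (gk c (a / 6)) e tau) <=
  (exp (a * tau^4 / 18) - 1) * (Rpower tau (c + 1) / (c + 1)).
Proof.
  intros He Het Ht1.
  assert (Hf : ex_RInt (fI a c) e tau) by (apply pcont_ex; [apply fI_pcont'|lra|lra]).
  assert (Hg : ex_RInt (gk c (a / 6)) e tau) by (apply pcont_ex; [apply gk_pcont|lra|lra]).
  rewrite <- RInt_minus' by auto.
  eapply Rle_trans; [apply abs_RInt_le; [auto|apply (ex_RInt_minus (V:=R_NormedModule)); auto]|].
  apply Rle_trans with (RInt (fun t => (exp (a * tau^4 / 18) - 1) * Rpower t c) e tau).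
  - apply RInt_le; auto.
    + apply (ex_RInt_continuous (V:=R_CompleteNormedModule)). intros z Hz.
      assert (0 < z) by (destruct Hz as [Hz _]; eapply Rlt_le_trans; [|exact Hz]; unfold Rmin; destruct (Rle_dec e tau); lra).
      apply (ccomp (fun t => fI a c t - gk c (a / 6) t) Rabs); [|apply cabs].
      apply cplus. apply fI_pcont'; auto. apply copp. apply gk_pcont; auto.
    + apply pcont_ex; [apply pcont_scal, pcont_Rpower|lra|lra].
    + intros x Hx. eapply Rle_trans; [apply (fI_near a c Ha x); lra|].
      rewrite (Rmult_comm (exp (a * tau ^ 4 / 18) - 1)). apply Rmult_le_compat_l; [left; apply Rpower_pos|].
      assert (exp (a * x ^ 4 / 18) <= exp (a * tau ^ 4 / 18)); [|lra].
      apply exp_le'. assert (x^4 <= tau^4) by (apply pow_incr; lra). unfold Rdiv. nra.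
  - rewrite RInt_scal' by (apply pcont_ex; [apply pcont_Rpower|lra|lra]).
    apply Rmult_le_compat_l.
    + assert (1 <= exp (a * tau ^ 4 / 18)); [|lra]. rewrite <- exp_0. apply exp_le'.
      assert (0 <= tau^4) by (apply pow_le; lra). unfold Rdiv. nra.
    + apply RInt_Rpower_bound_le; lra.
Qed.

Lemma combined e tau M : 0 < e -> e <= tau -> tau <= 1 -> 1 <= M -> a / 2 - c - 1 >= 1 ->
  Rabs (RInt (fI a c) e M - RInt (gk c (a / 6)) e M) <=
  (exp (a * tau^4 / 18) - 1) * (Rpower tau (c + 1) / (c + 1))
  + 2 * (Rpower (12 * p / a) p / (2 * tau^2)) + exp (- (3 * a / 40)).
Proof.
  intros He Het Ht1 HM Hac.
  pose proof (near_int e tau He Het Ht1) as Hn.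
  assert (Exf : forall x y, 0 < x -> 0 < y -> ex_RInt (fI a c) x y) by (intros; apply pcont_ex; auto; apply fI_pcont').
  assert (Exg : forall x y, 0 < x -> 0 < y -> ex_RInt (gk c (a/6)) x y) by (intros; apply pcont_ex; auto; apply gk_pcont).
  assert (Exd : forall x y, 0 < x -> 0 < y -> ex_RInt (gk c (a/12)) x y) by (intros; apply pcont_ex; auto; apply gk_pcont).
  rewrite <- (Chasles' (fI a c) e tau M) by (apply Exf; lra).
  rewrite <- (Chasles' (fI a c) tau 1 M) by (apply Exf; lra).
  rewrite <- (Chasles' (gk c (a/6)) e tau M) by (apply Exg; lra).
  assert (H1 : 0 <= RInt (fI a c) tau 1) by (apply RInt_ge_0; [lra|apply Exf; lra|intros; apply fI_ge0]).
  assert (H2 : RInt (fI a c) tau 1 <= RInt (gk c (a/12)) tau 1).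
  { apply RInt_le'; try lra. apply fI_pcont'. apply gk_pcont. intros x Hx.
    eapply Rle_trans; [apply fI_le_D; auto; lra|]. unfold gk. right. f_equal. f_equal. f_equal. field. }
  assert (H3 : RInt (gk c (a/12)) tau 1 <= Rpower (12 * p / a) p / (2 * tau^2)) by (apply D_int_bound; lra).
  assert (H4 : 0 <= RInt (fI a c) 1 M) by (apply RInt_ge_0; [lra|apply Exf; lra|intros; apply fI_ge0]).
  assert (H5 : RInt (fI a c) 1 M <= exp (- (3 * a / 40))) by (apply fI_tail_int; auto).
  assert (H6 : 0 <= RInt (gk c (a/6)) tau M) by (apply RInt_ge_0; [lra|apply Exg; lra|intros; apply gk_ge0]).
  assert (H7 : RInt (gk c (a/6)) tau M <= RInt (gk c (a/12)) tau M).
  { apply RInt_le'; try lra. apply gk_pcont. apply gk_pcont. intros x Hx. apply gk_le; lra. }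
  assert (H8 : RInt (gk c (a/12)) tau M <= Rpower (12 * p / a) p / (2 * tau^2)) by (apply D_int_bound; lra).
  set (A := RInt (fI a c) e tau - RInt (gk c (a / 6)) e tau) in *.
  replace (RInt (fI a c) e tau + (RInt (fI a c) tau 1 + RInt (fI a c) 1 M) -
    (RInt (gk c (a / 6)) e tau + RInt (gk c (a / 6)) tau M)) with
    (A + (RInt (fI a c) tau 1 + RInt (fI a c) 1 M - RInt (gk c (a / 6)) tau M)) by (unfold A; ring).
  eapply Rle_trans; [apply Rabs_triang|].
  assert (Rabs (RInt (fI a c) tau 1 + RInt (fI a c) 1 M - RInt (gk c (a / 6)) tau M) <=
    2 * (Rpower (12 * p / a) p / (2 * tau ^ 2)) + exp (- (3 * a / 40))) by (apply Rabs_le; split; lra).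
  lra.
Qed.

End Main.

Lemma exp_small x : 0 <= x <= 1/2 -> exp x - 1 <= 2 * x.
Proof.
  intros Hx. pose proof (exp_ge_1plus' (- x)). rewrite exp_Ropp in H.
  assert (He := exp_pos x).
  assert (exp x * (1 - x) <= 1).
  { apply (Rmult_le_compat_l (exp x)) in H; [|lra]. rewrite Rinv_r in H by lra. lra. }
  nra.
Qed.

Section Scaled.
Variables c a X : R.
Hypothesis Hc : -1 < c.
Hypothesis HX : 0 < X.
Hypothesis Ha6 : 6 * X <= a.
Hypothesis Hac : a / 2 - c - 1 >= 1.
Let s := (c + 1) / 2.
Let p := s + 1.
Let tau := sqrt (6 * X / a).

Lemma a_pos : 0 < a.
Proof. lra. Qed.

Lemma tau_pos : 0 < tau.
Proof. unfold tau. apply sqrt_lt_R0. apply Rdiv_lt_0_compat; lra. Qed.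

Lemma tau_sq : tau^2 = 6 * X / a.
Proof. unfold tau. simpl. rewrite Rmult_1_r. apply sqrt_sqrt. left; apply Rdiv_lt_0_compat; lra. Qed.

Lemma tau_le1 : tau <= 1.
Proof.
  pose proof tau_pos. pose proof tau_sq. assert (6 * X / a <= 1) by (apply div_le_const; lra).
  destruct (Rle_dec tau 1); auto. assert (1 < tau^2) by (simpl; nra). lra.
Qed.

Lemma E1 : 2 * Rpower a s * ((exp (a * tau^4 / 18) - 1) * (Rpower tau (c + 1) / (c + 1)))
  = (exp (2 * X^2 / a) - 1) * Rpower (6 * X) s / s.
Proof.
  assert (Hp : 0 < 6 * X / a) by (apply Rdiv_lt_0_compat; lra).
  replace (a * tau^4 / 18) with (2 * X^2 / a).
  2:{ replace (tau^4) with ((tau^2)^2) by ring. rewrite tau_sq. field. lra. }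
  unfold tau. rewrite <- Rpower_sqrt by auto. rewrite Rpower_mult.
  replace (/ 2 * (c + 1)) with s by (unfold s; field).
  replace (c + 1) with (2 * s) by (unfold s; field).
  assert (Hs : 0 < s) by (unfold s; lra).
  replace (Rpower (6 * X) s) with (Rpower a s * Rpower (6 * X / a) s).
  2:{ rewrite Rpower_mult_distr by lra. f_equal. field. lra. }
  field. lra.
Qed.

Lemma E2 : 2 * Rpower a s * (2 * (Rpower (12 * p / a) p / (2 * tau^2))) = Rpower (12 * p) p / (3 * X).
Proof.
  rewrite tau_sq. assert (Hp : 0 < p) by (unfold p, s; lra).
  rewrite Rpower_div by lra.
  replace (2 * Rpower a s * (2 * (Rpower (12 * p) p * Rpower a (- p) / (2 * (6 * X / a)))))
    with (Rpower (12 * p) p * (Rpower a s * Rpower a (- p) * a) / (3 * X)) by (field; lra).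
  rewrite <- Rpower_plus. rewrite <- (Rpower_1 a) at 2 by lra. rewrite <- Rpower_plus.
  replace (s + - p + 1) with 0 by (unfold p; ring). rewrite Rpower_O by lra. field. lra.
Qed.

Lemma E3 : 2 * Rpower a s * exp (- (3 * a / 40)) <= 2 * Rpower (40 * p / 3) p / a.
Proof.
  assert (Hp : 0 < p) by (unfold p, s; lra).
  assert (H := exp_neg_le_pow (3 * a / 40) p ltac:(lra) Hp).
  replace (p / (3 * a / 40)) with ((40 * p / 3) / a) in H by (field; lra).
  rewrite Rpower_div in H by lra.
  assert (0 < Rpower a s) by apply Rpower_pos.
  apply Rle_trans with (2 * Rpower a s * (Rpower (40 * p / 3) p * Rpower a (- p))).
  - apply Rmult_le_compat_l; lra.
  - right. replace (2 * Rpower a s * (Rpower (40 * p / 3) p * Rpower a (- p))) with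
      (2 * Rpower (40 * p / 3) p * (Rpower a s * Rpower a (- p))) by ring.
    rewrite <- Rpower_plus. replace (s + - p) with (- (1)) by (unfold p; ring).
    rewrite Rpower_Ropp, Rpower_1 by lra. field. lra.
Qed.

Lemma scaled e M : 0 < e -> e <= tau -> 1 <= M ->
  2 * Rpower a s * Rabs (RInt (fI a c) e M - RInt (gk c (a / 6)) e M) <=
  (exp (2 * X^2 / a) - 1) * Rpower (6 * X) s / s + Rpower (12 * p) p / (3 * X) + 2 * Rpower (40 * p / 3) p / a.
Proof.
  intros He Het HM. pose proof tau_le1 as Ht1.
  assert (H := combined c a Hc a_pos e tau M He Het Ht1 HM Hac).
  assert (Hpos : 0 <= 2 * Rpower a s) by (pose proof (Rpower_pos a s); lra).
  apply (Rmult_le_compat_l _ _ _ Hpos) in H.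
  rewrite 2!(Rmult_plus_distr_l (2 * Rpower a s)) in H.
  fold s in H. fold p in H. rewrite E1, E2 in H. pose proof E3. lra.
Qed.

End Scaled.

Lemma J_exists c a : -1 < c -> 0 < a -> a / 2 - c - 1 >= 1 -> exists J, impr (fI a c) J.
Proof.
  intros Hc Ha Hac. apply (impr_exists_split (fI a c) (1 / (c + 1)) (exp (- (3 * a / 40)))).
  - apply fI_pcont; auto.
  - intros t _. apply fI_ge0.
  - intros e He. apply Rle_trans with (RInt (fun t => Rpower t c) e 1).
    + apply RInt_le'; try lra. apply fI_pcont; auto. apply pcont_Rpower.
      intros x Hx. eapply Rle_trans; [apply fI_le_D; auto; lra|].
      replace (Rpower x c) with (Rpower x c * 1) at 2 by ring.
      apply Rmult_le_compat_l; [left; apply Rpower_pos|]. rewrite <- exp_0. apply exp_le'.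
      assert (0 <= x^2) by (apply pow_le; lra). assert (0 <= a * x^2) by (apply Rmult_le_pos; lra). lra.
    + eapply Rle_trans; [apply RInt_Rpower_bound_le; lra|]. rewrite Rpower_one. lra.
  - intros M HM. apply fI_tail_int; auto.
Qed.

Lemma fI_neg_fun a c : (fun t => I_integrand a (a - c) (- t)) = fI a c.
Proof. apply functional_extensionality. intros t. apply (fI_neg a c t). Qed.

Lemma is_I_of_J c a J : 0 < a -> impr (fI a c) J -> is_I a (a - c) (2 * J).
Proof.
  intros Ha HJ. exists J, J. split; [|split].
  - apply (impr_to_is (fI a c)); auto. apply fI_pcont; auto.
  - rewrite fI_neg_fun. apply (impr_to_is (fI a c)); auto. apply fI_pcont; auto.
  - ring.
Qed.

Lemma is_I_eq c a J v : impr (fI a c) J -> is_I a (a - c) v -> v = 2 * J.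
Proof.
  intros HJ [l1 [l2 [H1 [H2 ->]]]]. rewrite fI_neg_fun in H2.
  apply is_to_impr in H1. apply is_to_impr in H2.
  assert (l1 = J) by (apply (impr_uniq (fI a c)); auto).
  assert (l2 = J) by (apply (impr_uniq (fI a c)); auto). subst. ring.
Qed.

Lemma Rmax_l' x y : x <= Rmax x y. Proof. unfold Rmax; destruct (Rle_dec x y); lra. Qed.
Lemma Rmax_r' x y : y <= Rmax x y. Proof. unfold Rmax; destruct (Rle_dec x y); lra. Qed.
Lemma Rmin_l' x y : Rmin x y <= x. Proof. unfold Rmin; destruct (Rle_dec x y); lra. Qed.
Lemma Rmin_r' x y : Rmin x y <= y. Proof. unfold Rmin; destruct (Rle_dec x y); lra. Qed.

Theorem part1 (c : R) : -1 < c ->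
    exists G : R, is_Gamma ((c + 1) / 2) G /\
    (exists A : R, forall alpha : R, A < alpha ->
        exists v : R, is_I alpha (alpha - c) v) /\
    (forall eps : R, 0 < eps ->
      exists A : R, forall alpha v : R, A < alpha ->
        is_I alpha (alpha - c) v ->
        Rabs (Rpower alpha ((c + 1) / 2) * v - Rpower 6 ((c + 1) / 2) * G) < eps).
Proof.
  intros Hc. set (s := (c + 1) / 2). assert (Hs : 0 < s) by (unfold s; lra).
  destruct (Gamma_exists s Hs) as [G HG].
  exists G. split; [|split].
  - exact (impr_to_is (Gf s) G (Gf_pcont s) HG).
  - exists (Rmax 1 (2 * c + 4)). intros a Ha.
    pose proof (Rmax_l' 1 (2 * c + 4)). pose proof (Rmax_r' 1 (2 * c + 4)).
    destruct (J_exists c a Hc ltac:(lra) ltac:(lra)) as [J HJ].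
    exists (2 * J). apply is_I_of_J; auto; lra.
  - intros eps Heps. set (p := s + 1). assert (Hp : 0 < p) by (unfold p; lra).
    set (K2 := Rpower (12 * p) p). set (K3 := 2 * Rpower (40 * p / 3) p).
    assert (HK2 : 0 < K2) by apply Rpower_pos.
    assert (HK3 : 0 < K3) by (unfold K3; pose proof (Rpower_pos (40 * p / 3) p); lra).
    set (X := Rmax 1 (8 * K2 / (3 * eps))).
    assert (HX1 : 1 <= X) by apply Rmax_l'.
    assert (HX2 : 8 * K2 / (3 * eps) <= X) by apply Rmax_r'.
    set (K1 := Rpower (6 * X) s). assert (HK1 : 0 < K1) by apply Rpower_pos.
    set (A := Rmax (Rmax (6 * X) (2 * c + 4)) (Rmax (4 * X^2) (Rmax (32 * X^2 * K1 / (s * eps)) (8 * K3 / eps)))).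
    exists A. intros a v Ha Hv.
    assert (HA1 : 6 * X <= a) by (pose proof (Rmax_l' (Rmax (6 * X) (2 * c + 4)) (Rmax (4 * X^2) (Rmax (32 * X^2 * K1 / (s * eps)) (8 * K3 / eps)))); pose proof (Rmax_l' (6 * X) (2 * c + 4)); unfold A in Ha; lra).
    assert (HA2 : 2 * c + 4 <= a) by (pose proof (Rmax_l' (Rmax (6 * X) (2 * c + 4)) (Rmax (4 * X^2) (Rmax (32 * X^2 * K1 / (s * eps)) (8 * K3 / eps)))); pose proof (Rmax_r' (6 * X) (2 * c + 4)); unfold A in Ha; lra).
    assert (HA3 : 4 * X^2 <= a) by (pose proof (Rmax_r' (Rmax (6 * X) (2 * c + 4)) (Rmax (4 * X^2) (Rmax (32 * X^2 * K1 / (s * eps)) (8 * K3 / eps)))); pose proof (Rmax_l' (4 * X^2) (Rmax (32 * X^2 * K1 / (s * eps)) (8 * K3 / eps))); unfold A in Ha; lra).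
    assert (HA4 : 32 * X^2 * K1 / (s * eps) <= a) by (pose proof (Rmax_r' (Rmax (6 * X) (2 * c + 4)) (Rmax (4 * X^2) (Rmax (32 * X^2 * K1 / (s * eps)) (8 * K3 / eps)))); pose proof (Rmax_r' (4 * X^2) (Rmax (32 * X^2 * K1 / (s * eps)) (8 * K3 / eps))); pose proof (Rmax_l' (32 * X^2 * K1 / (s * eps)) (8 * K3 / eps)); unfold A in Ha; lra).
    assert (HA5 : 8 * K3 / eps <= a) by (pose proof (Rmax_r' (Rmax (6 * X) (2 * c + 4)) (Rmax (4 * X^2) (Rmax (32 * X^2 * K1 / (s * eps)) (8 * K3 / eps)))); pose proof (Rmax_r' (4 * X^2) (Rmax (32 * X^2 * K1 / (s * eps)) (8 * K3 / eps))); pose proof (Rmax_r' (32 * X^2 * K1 / (s * eps)) (8 * K3 / eps)); unfold A in Ha; lra).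
    clear Ha.
    assert (Ha0 : 0 < a) by lra. assert (Hac : a / 2 - c - 1 >= 1) by lra.
    destruct (J_exists c a Hc Ha0 Hac) as [J HJ].
    rewrite (is_I_eq c a J v HJ Hv).
    assert (HT1 : (exp (2 * X^2 / a) - 1) * K1 / s <= eps / 8).
    { assert (0 <= 2 * X^2 / a <= 1/2).
      { split. apply Rdiv_le_0_compat; [|lra]. assert (0 <= X^2) by (apply pow_le; lra). lra.
        apply div_le_const; lra. }
      pose proof (exp_small _ H).
      apply Rle_trans with (2 * (2 * X^2 / a) * K1 / s).
      - unfold Rdiv. apply Rmult_le_compat_r; [left; apply Rinv_0_lt_compat; auto|]. apply Rmult_le_compat_r; lra.
      - replace (2 * (2 * X ^ 2 / a) * K1 / s) with ((32 * X^2 * K1 / (s * eps)) / a * (eps / 8)) by (field; lra).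
        replace (eps / 8) with (1 * (eps / 8)) at 2 by ring. apply Rmult_le_compat_r; [lra|].
        apply div_le_const; lra. }
    assert (HT2 : K2 / (3 * X) <= eps / 8).
    { apply div_le_const; [lra|]. apply (Rmult_le_reg_r (8 / (3 * eps))). apply Rdiv_lt_0_compat; lra.
      replace (K2 * (8 / (3 * eps))) with (8 * K2 / (3 * eps)) by (field; lra).
      replace (eps / 8 * (3 * X) * (8 / (3 * eps))) with X by (field; lra). lra. }
    assert (HT3 : K3 / a <= eps / 8).
    { apply div_le_const; [lra|]. apply (Rmult_le_reg_r (8 / eps)). apply Rdiv_lt_0_compat; lra.
      replace (K3 * (8 / eps)) with (8 * K3 / eps) by (field; lra).
      replace (eps / 8 * a * (8 / eps)) with a by (field; lra). lra. }
    set (k := a / 6). assert (Hk : 0 < k) by (unfold k; lra).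
    assert (H6s : 0 < Rpower 6 s) by apply Rpower_pos.
    assert (Has : 0 < Rpower a s) by apply Rpower_pos.
    assert (Hks : Rpower 6 s * Rpower k s = Rpower a s) by (rewrite Rpower_mult_distr by lra; f_equal; unfold k; field).
    set (eta := eps / (8 * Rpower 6 s)). assert (Heta : 0 < eta) by (unfold eta; apply Rdiv_lt_0_compat; lra).
    destruct (HG eta Heta) as [dG [MG [HdG [HMG HGb]]]].
    set (tau := sqrt (6 * X / a)).
    assert (Htau : 0 < tau) by (apply tau_pos; lra).
    assert (Hbound : Rabs (J - Rpower 6 s * G / (2 * Rpower a s)) <= (eps / 2) / (2 * Rpower a s)).
    { apply (impr_bound (fI a c) J); auto.
      exists (Rmin tau (sqrt (dG / k))), (Rmax 1 (sqrt (MG / k))).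
      split. { unfold Rmin; destruct (Rle_dec tau (sqrt (dG / k))); auto. apply sqrt_lt_R0. apply Rdiv_lt_0_compat; lra. }
      intros e M He HM.
      pose proof (Rmin_l' tau (sqrt (dG / k))). pose proof (Rmin_r' tau (sqrt (dG / k))).
      pose proof (Rmax_l' 1 (sqrt (MG / k))). pose proof (Rmax_r' 1 (sqrt (MG / k))).
      assert (He1 : k * e^2 < dG).
      { assert (e < sqrt (dG / k)) by lra. assert (Hq : e^2 < dG / k).
        { replace (dG / k) with (sqrt (dG / k) * sqrt (dG / k)) by (apply sqrt_sqrt; left; apply Rdiv_lt_0_compat; lra).
          simpl. nra. }
        apply (Rmult_lt_compat_l k) in Hq; auto. replace (k * (dG / k)) with dG in Hq by (field; lra). auto. }
      assert (HM1 : MG < k * M^2).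
      { assert (sqrt (MG / k) < M) by lra. assert (Hq : MG / k < M^2).
        { replace (MG / k) with (sqrt (MG / k) * sqrt (MG / k)) by (apply sqrt_sqrt; left; apply Rdiv_lt_0_compat; lra).
          pose proof (sqrt_pos (MG / k)). simpl. nra. }
        apply (Rmult_lt_compat_l k) in Hq; auto. replace (k * (MG / k)) with MG in Hq by (field; lra). auto. }
      assert (HGe : 0 < k * e ^ 2) by (apply Rmult_lt_0_compat; auto; apply pow_lt; lra).
      specialize (HGb (k * e^2) (k * M^2) (conj HGe He1) HM1).
      unfold s in HGb. rewrite subst_gamma in HGb by lra. fold s in HGb.
      assert (HGa : Rabs (2 * Rpower a s * RInt (gk c (a / 6)) e M - Rpower 6 s * G) <= eps / 8).
      { rewrite <- Hks. fold k.
        replace (2 * (Rpower 6 s * Rpower k s) * RInt (gk c k) e M - Rpower 6 s * G)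
          with (Rpower 6 s * (2 * Rpower k s * RInt (gk c k) e M - G)) by ring.
        rewrite Rabs_mult, (Rabs_pos_eq (Rpower 6 s)) by lra.
        apply Rle_trans with (Rpower 6 s * eta). apply Rmult_le_compat_l; lra.
        unfold eta. right. field. lra. }
      assert (HS := scaled c a X Hc ltac:(lra) HA1 Hac e M ltac:(lra) ltac:(fold tau; lra) ltac:(lra)).
      fold s in HS. fold p in HS. fold K1 in HS. fold K2 in HS. unfold K3 in HT3.
      assert (Htot : Rabs (2 * Rpower a s * RInt (fI a c) e M - Rpower 6 s * G) <= eps / 2).
      { replace (2 * Rpower a s * RInt (fI a c) e M - Rpower 6 s * G) with
          (2 * Rpower a s * (RInt (fI a c) e M - RInt (gk c (a / 6)) e M) + (2 * Rpower a s * RInt (gk c (a / 6)) e M - Rpower 6 s * G)) by ring.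
        eapply Rle_trans; [apply Rabs_triang|].
        rewrite Rabs_mult, (Rabs_pos_eq (2 * Rpower a s)) by lra. lra. }
      replace (RInt (fI a c) e M - Rpower 6 s * G / (2 * Rpower a s)) with
        ((2 * Rpower a s * RInt (fI a c) e M - Rpower 6 s * G) / (2 * Rpower a s)) by (field; lra).
      unfold Rdiv. rewrite Rabs_mult, (Rabs_pos_eq (/ (2 * Rpower a s))) by (left; apply Rinv_0_lt_compat; lra).
      apply Rmult_le_compat_r; [left; apply Rinv_0_lt_compat; lra|auto]. }
    replace (Rpower a s * (2 * J) - Rpower 6 s * G) with (2 * Rpower a s * (J - Rpower 6 s * G / (2 * Rpower a s))) by (field; lra).
    rewrite Rabs_mult, (Rabs_pos_eq (2 * Rpower a s)) by lra.
    apply Rmult_le_compat_l with (r := 2 * Rpower a s) in Hbound; [|lra].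
    replace (2 * Rpower a s * (eps / 2 / (2 * Rpower a s))) with (eps / 2) in Hbound by (field; lra). lra.
Qed.

Lemma RInt_ext' (f g : R -> R) a b : (forall x, Rmin a b < x < Rmax a b -> f x = g x) -> RInt f a b = RInt g a b.
Proof. intros Hfg. apply RInt_ext. exact Hfg. Qed.

Definition gauss (t : R) := exp (- (t^2)).

Lemma gauss_cont t : continuous gauss t.
Proof.
  unfold gauss. apply (ccomp (fun x => - (x^2)) exp); [|apply cexp].
  apply copp. apply (cext (fun x => x * x)). intros; ring. apply (cmul (fun x => x) (fun x => x)); apply cid.
Qed.

Lemma gauss_ex a b : ex_RInt gauss a b.
Proof. apply (ex_RInt_continuous (V:=R_CompleteNormedModule)). intros; apply gauss_cont. Qed.

Lemma gauss_bounds t : 0 < gauss t <= 1.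
Proof.
  unfold gauss. split. apply exp_pos. rewrite <- exp_0. apply exp_le'. assert (0 <= t^2) by (simpl; nra). lra.
Qed.

Definition H (x : R) := RInt gauss 0 x.

Lemma H_derive x : is_derive H x (gauss x).
Proof.
  apply (is_derive_RInt (V:=R_CompleteNormedModule) gauss H 0 x).
  - apply filter_forall. intros b. apply RInt_correct. apply gauss_ex.
  - apply gauss_cont.
Qed.

Definition psif (u t : R) := exp (- (u^2 * (1 + t^2))) / (1 + t^2).
Definition psi (x : R) := RInt (fun t => psif x t) 0 1.

Lemma psif_cont u t : continuous (fun t => psif u t) t.
Proof.
  apply (continuous_ext (fun t => exp (- (u * u * (1 + t * t))) * / (1 + t * t))).
  { intros y. unfold psif. simpl. unfold Rdiv. repeat rewrite Rmult_1_r. reflexivity. }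
  apply (cmul (fun t => exp (- (u * u * (1 + t * t)))) (fun t => / (1 + t * t))).
  - apply (ccomp (fun t => - (u * u * (1 + t * t))) exp); [|apply cexp].
    apply copp. apply (cmul (fun _ => u * u) (fun t => 1 + t * t)). apply cconst.
    apply (cplus (fun _ => 1) (fun t => t * t)). apply cconst. apply (cmul (fun x => x) (fun x => x)); apply cid.
  - apply creals. apply derivable_continuous_pt. exists (- (2 * t) / (1 + t * t)^2).
    apply is_derive_Reals. auto_derive. assert (0 <= t * t) by nra. lra. field. assert (0 <= t * t) by nra. lra.
Qed.

Lemma psif_ex u a b : ex_RInt (fun t => psif u t) a b.
Proof. apply (ex_RInt_continuous (V:=R_CompleteNormedModule)). intros; apply psif_cont. Qed.

Definition dpsif (u v : R) := (-2 * u) * exp (- (u * u * (1 + v * v))).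

Lemma psif_derive u t : is_derive (fun z => psif z t) u (dpsif u t).
Proof.
  unfold psif, dpsif. auto_derive. auto. replace (u * (u * 1)) with (u * u) by ring. replace (t * (t * 1)) with (t * t) by ring. field. assert (0 <= t * t) by nra. lra.
Qed.

Lemma dpsif_cont u v : continuity_2d_pt dpsif u v.
Proof.
  unfold dpsif. apply continuity_2d_pt_mult.
  - apply continuity_2d_pt_mult. apply continuity_2d_pt_const. apply continuity_2d_pt_id1.
  - apply (continuity_1d_2d_pt_comp exp (fun u v => - (u * u * (1 + v * v)))).
    apply derivable_continuous_pt. apply derivable_exp.
    apply continuity_2d_pt_opp. apply continuity_2d_pt_mult.
    apply continuity_2d_pt_mult; apply continuity_2d_pt_id1.
    apply continuity_2d_pt_plus. apply continuity_2d_pt_const.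
    apply continuity_2d_pt_mult; apply continuity_2d_pt_id2.
Qed.

Lemma psi_derive x : is_derive psi x (RInt (fun t => dpsif x t) 0 1).
Proof.
  assert (HD : forall u t, Derive (fun z => psif z t) u = dpsif u t) by (intros; apply is_derive_unique; apply psif_derive).
  rewrite <- (RInt_ext' (fun t => Derive (fun u => psif u t) x)).
  2:{ intros; apply HD. }
  unfold psi. apply (is_derive_RInt_param psif 0 1 x).
  - apply filter_forall. intros y t _. eexists. apply psif_derive.
  - intros t _. apply (continuity_2d_pt_ext dpsif). intros; symmetry; apply HD. apply dpsif_cont.
  - apply filter_forall. intros y. apply psif_ex.
Qed.

Lemma dpsif_int x : RInt (fun t => dpsif x t) 0 1 = -2 * gauss x * H x.
Proof.
  rewrite (RInt_ext' (fun t => dpsif x t) (fun t => (-2 * gauss x) * (x * gauss (x * t + 0)))).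
  2:{ intros t _. unfold dpsif, gauss. replace (x * t + 0) with (x * t) by ring.
      replace (exp (- (x * x * (1 + t * t)))) with (exp (- (x^2)) * exp (- ((x*t)^2))) by (rewrite <- exp_plus; f_equal; ring). ring. }
  rewrite RInt_scal'.
  2:{ apply (ex_RInt_continuous (V:=R_CompleteNormedModule)). intros z _. apply (cmul (fun _ => x)). apply cconst.
      apply (ccomp (fun t => x * t + 0) gauss). apply (cplus (fun t => x * t) (fun _ => 0)). apply (cmul (fun _ => x)). apply cconst. apply cid. apply cconst. apply gauss_cont. }
  f_equal. unfold H.
  assert (Hc := RInt_comp_lin (V:=R_CompleteNormedModule) gauss x 0 0 1 (gauss_ex _ _)).
  change (RInt (fun y => x * gauss (x * y + 0)) 0 1 = RInt gauss (x * 0 + 0) (x * 1 + 0)) in Hc.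
  replace (x * 0 + 0) with 0 in Hc by ring. replace (x * 1 + 0) with x in Hc by ring.
  exact Hc.
Qed.

Definition Phi (x : R) := H x * H x + psi x.

Lemma Phi_derive t : is_derive Phi t 0.
Proof.
  apply is_derive_Reals.
  assert (h1 := proj1 (is_derive_Reals _ _ _) (H_derive t)).
  assert (h2 := proj1 (is_derive_Reals _ _ _) (psi_derive t)).
  rewrite dpsif_int in h2.
  assert (h3 := derivable_pt_lim_mult H H t _ _ h1 h1).
  assert (h4 := derivable_pt_lim_plus (mult_fct H H) psi t _ _ h3 h2).
  replace 0 with (gauss t * H t + H t * gauss t + -2 * gauss t * H t) by ring.
  exact h4.
Qed.

Lemma H0 : H 0 = 0.
Proof. unfold H. apply (RInt_point (V:=R_CompleteNormedModule)). Qed.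

Lemma psi0 : psi 0 = PI / 4.
Proof.
  unfold psi. rewrite (RInt_ext' (fun t => psif 0 t) (fun t => / (1 + t^2))).
  2:{ intros x _. unfold psif. replace (- (0 ^ 2 * (1 + x ^ 2))) with 0 by ring. rewrite exp_0. field.
      assert (0 <= x^2) by (simpl; nra). lra. }
  apply is_RInt_unique.
  replace (PI / 4) with (minus (atan 1) (atan 0)) by (rewrite atan_1, atan_0; unfold minus, plus, opp; simpl; ring).
  apply (is_RInt_derive (V:=R_CompleteNormedModule) atan (fun t => / (1 + t^2))).
  - intros x _. apply is_derive_Reals. apply derivable_pt_lim_atan.
  - intros x _. apply creals. apply derivable_continuous_pt. eexists. apply is_derive_Reals. auto_derive.
    assert (0 <= x * (x * 1)) by nra. lra. reflexivity.
Qed.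

Lemma Phi_const x : 0 < x -> H x * H x + psi x = PI / 4.
Proof.
  intros Hx. change (Phi x = PI / 4).
  rewrite <- (eq_is_derive (V:=R_NormedModule) Phi 0 x); auto.
  - unfold Phi. rewrite H0, psi0. ring.
  - intros t _. apply Phi_derive.
Qed.

Lemma psi_bounds x : 0 <= psi x <= gauss x.
Proof.
  unfold psi. split.
  - apply RInt_ge_0; [lra|apply psif_ex|]. intros t _. unfold psif.
    apply Rdiv_le_0_compat; [left; apply exp_pos|]. assert (0 <= t^2) by (simpl; nra). lra.
  - apply Rle_trans with (RInt (fun _ => gauss x) 0 1).
    + apply RInt_le; [lra|apply psif_ex|apply ex_RInt_const|].
      intros t Ht. unfold psif, gauss. assert (0 <= t^2) by (simpl; nra).
      assert (0 <= x^2) by (simpl; nra).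
      apply Rle_trans with (exp (- (x ^ 2 * (1 + t ^ 2)))).
      * unfold Rdiv. replace (exp (- (x ^ 2 * (1 + t ^ 2)))) with (exp (- (x ^ 2 * (1 + t ^ 2))) * 1) at 2 by ring.
        apply Rmult_le_compat_l; [left; apply exp_pos|]. rewrite <- Rinv_1. apply Rinv_le_contravar; lra.
      * apply exp_le'. nra.
    + rewrite RInt_const. change (scal (1 - 0) (gauss x)) with ((1 - 0) * gauss x). lra.
Qed.

Lemma H_ge0 x : 0 <= x -> 0 <= H x.
Proof. intros Hx. unfold H. apply RInt_ge_0; auto. apply gauss_ex. intros; pose proof (gauss_bounds x0); lra. Qed.

Lemma H_le x : 0 <= x -> H x <= x.
Proof.
  intros Hx. unfold H. apply Rle_trans with (RInt (fun _ => 1) 0 x).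
  - apply RInt_le; auto. apply gauss_ex. apply ex_RInt_const. intros; pose proof (gauss_bounds x0); lra.
  - rewrite RInt_const. change (scal (x - 0) 1) with ((x - 0) * 1). lra.
Qed.

Lemma sqrtPI_ge1 : 1 <= sqrt PI.
Proof. rewrite <- sqrt_1. apply sqrt_le_1_alt. pose proof PI_gt_3. lra. Qed.

Lemma H_limit x : 0 < x -> Rabs (H x - sqrt PI / 2) <= 2 * gauss x.
Proof.
  intros Hx. pose proof (Phi_const x Hx) as P1. pose proof (psi_bounds x) as P2. pose proof (H_ge0 x ltac:(lra)) as P3.
  set (r := sqrt PI / 2). assert (Hr : r * r = PI / 4).
  { unfold r. replace (sqrt PI / 2 * (sqrt PI / 2)) with (sqrt PI * sqrt PI / 4) by field.
    rewrite sqrt_sqrt; [reflexivity|pose proof PI_gt_3; lra]. }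
  assert (Hr1 : 1/2 <= r) by (unfold r; pose proof sqrtPI_ge1; lra).
  assert (Heq : (H x - r) * (H x + r) = - psi x) by nra.
  apply Rabs_le. split; nra.
Qed.

Lemma gauss_impr : impr gauss (sqrt PI / 2).
Proof.
  intros eps Heps. exists (Rmin 1 (eps / 2)), (Rmax 1 (4 / eps)).
  split. { unfold Rmin; destruct (Rle_dec 1 (eps/2)); lra. }
  split. { unfold Rmax; destruct (Rle_dec 1 (4/eps)); lra. }
  intros e M He HM.
  assert (He2 : e < eps / 2) by (pose proof (Rmin_r 1 (eps/2)); lra).
  assert (HM1 : 1 < M) by (pose proof (Rmax_l 1 (4/eps)); lra).
  assert (HM2 : 4 / eps < M) by (pose proof (Rmax_r 1 (4/eps)); lra).
  assert (Hc : H e + RInt gauss e M = H M) by (unfold H; apply Chasles'; apply gauss_ex).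
  assert (Hl := H_limit M ltac:(lra)).
  assert (Hg : gauss M <= / M).
  { unfold gauss. rewrite exp_Ropp. apply Rinv_le_contravar; [lra|].
    pose proof (exp_ge_1plus' (M^2)). simpl in *. nra. }
  assert (Hme : 2 / M < eps / 2).
  { apply (Rmult_lt_reg_r M); [lra|]. replace (2 / M * M) with 2 by (field; lra).
    apply (Rmult_lt_compat_l (eps/2)) in HM2; [|lra]. replace (eps / 2 * (4 / eps)) with 2 in HM2 by (field; lra). lra. }
  pose proof (H_ge0 e ltac:(lra)) as P1. pose proof (H_le e ltac:(lra)) as P2.
  replace (RInt gauss e M - sqrt PI / 2) with ((H M - sqrt PI / 2) - H e) by lra.
  pose proof (Rle_abs (H M - sqrt PI / 2)) as Q1. pose proof (Rle_abs (- (H M - sqrt PI / 2))) as Q2. rewrite Rabs_Ropp in *.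
  unfold Rdiv in Hme. apply Rabs_def1; lra.
Qed.

Lemma sqrt_lt_sq x d : 0 <= x -> 0 < d -> x < d^2 -> sqrt x < d.
Proof.
  intros Hx Hd H. rewrite <- (sqrt_pow2 d) by lra. apply sqrt_lt_1_alt. split; auto.
Qed.

Lemma sq_lt_sqrt x d : 0 < d -> d^2 < x -> d < sqrt x.
Proof.
  intros Hd H. rewrite <- (sqrt_pow2 d) by lra. apply sqrt_lt_1_alt. split; auto. apply pow_le; lra.
Qed.

Lemma Gamma_half : impr (Gf ((0 + 1) / 2)) (sqrt PI).
Proof.
  intros eps Heps. destruct (gauss_impr (eps / 2) ltac:(lra)) as [d [M0 [Hd [HM0 K]]]].
  exists (d^2), (M0^2). split; [apply pow_lt; auto|split; [apply pow_lt; auto|]].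
  intros e M He HM.
  assert (Hsa : 0 < sqrt e) by (apply sqrt_lt_R0; lra).
  assert (Hsb : 0 < sqrt M) by (apply sqrt_lt_R0; assert (0 < M0^2) by (apply pow_lt; auto); lra).
  assert (Ee : e = 1 * sqrt e ^ 2) by (rewrite pow2_sqrt; lra).
  assert (EM : M = 1 * sqrt M ^ 2) by (rewrite pow2_sqrt; [ring|]; assert (0 < M0^2) by (apply pow_lt; auto); lra).
  rewrite Ee, EM. rewrite subst_gamma by lra. rewrite Rpower_one.
  rewrite (RInt_ext' (gk 0 1) gauss).
  2:{ intros x Hx. assert (0 < x) by (eapply Rle_lt_trans; [|apply Hx]; unfold Rmin; destruct (Rle_dec (sqrt e) (sqrt M)); lra).
      unfold gk, gauss. rewrite Rpower_O by auto. replace (1 * x^2) with (x^2) by ring. ring. }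
  assert (Ha : sqrt e < d) by (apply sqrt_lt_sq; lra).
  assert (Hb : M0 < sqrt M) by (apply sq_lt_sqrt; lra).
  specialize (K (sqrt e) (sqrt M) (conj Hsa Ha) Hb).
  replace (2 * 1 * RInt gauss (sqrt e) (sqrt M) - sqrt PI) with (2 * (RInt gauss (sqrt e) (sqrt M) - sqrt PI / 2)) by field.
  rewrite Rabs_mult, Rabs_pos_eq by lra. lra.
Qed.

Theorem mainTheorem5 :
  (forall c : R, -1 < c ->
    exists G : R, is_Gamma ((c + 1) / 2) G /\
    (exists A : R, forall alpha : R, A < alpha ->
        exists v : R, is_I alpha (alpha - c) v) /\
    (forall eps : R, 0 < eps ->
      exists A : R, forall alpha v : R, A < alpha ->
        is_I alpha (alpha - c) v ->
        Rabs (Rpower alpha ((c + 1) / 2) * v - Rpower 6 ((c + 1) / 2) * G) < eps))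
  /\
  ((exists A : R, forall alpha : R, A < alpha -> exists v : R, is_I alpha alpha v) /\
   (forall eps : R, 0 < eps ->
      exists A : R, forall alpha v : R, A < alpha -> is_I alpha alpha v ->
        Rabs (sqrt alpha * v - sqrt (6 * PI)) < eps)).
Proof.
  split; [exact part1|].
  destruct (part1 0 ltac:(lra)) as [G [HG [[A1 HA1] Hlim]]].
  assert (HGe : G = sqrt PI).
  { apply (impr_uniq (Gf ((0 + 1) / 2))). apply is_to_impr. exact HG. apply Gamma_half. }
  subst G.
  assert (Hhalf : (0 + 1) / 2 = / 2) by field.
  split.
  - exists A1. intros a Ha. destruct (HA1 a Ha) as [v Hv]. exists v. rewrite Rminus_0_r in Hv. exact Hv.
  - intros eps Heps. destruct (Hlim eps Heps) as [A2 HA2]. exists (Rmax A2 0).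
    intros a v Ha Hv. assert (Ha2 : A2 < a) by (pose proof (Rmax_l A2 0); lra).
    assert (Ha0 : 0 < a) by (pose proof (Rmax_r A2 0); lra).
    rewrite <- (Rminus_0_r a) in Hv at 2.
    specialize (HA2 a v Ha2 Hv). rewrite Hhalf in HA2.
    rewrite !Rpower_sqrt in HA2 by lra. rewrite sqrt_mult by (pose proof PI_gt_3; lra). exact HA2.
Qed.
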